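(* Let $B\ge 2$ and $G\ge 2$ be even integers. If $\min(B,G)\le 4$, then there is no balanced matrix $X\in\{-1,1\}^{G\times B}$ without collisions. If $B=G=6$ or $B=G=8$, then there exists a balanced matrix $X\in\{-1,1\}^{G\times B}$ without collisions.
   Context: Two vectors $v_1,v_2\in\{-1,1\}^k$ have a collision if $v_1=v_2$ or $v_1=-v_2$. A matrix $X\in\{-1,1\}^{n\times p}$ has no collisions if no two distinct rows of $X$ have a collision and no two distinct columns of $X$ have a collision. A matrix $X\in\{-1,1\}^{n\times p}$ is balanced if each of its rows sums to $0$ and each of its columns sums to $0$. *)

(* Defs.v *)
From mathcomp Require Import all_boot all_order all_algebra.
Set Implicit Arguments. Unset Strict Implicit. Unset Printing Implicit Defensive.
Import Order.TTheory GRing.Theory Num.Theory.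
Local Open Scope ring_scope.

Definition pm1_matrix (n p : nat) (X : 'M[int]_(n, p)) : Prop :=
  forall i j, X i j = 1 \/ X i j = -1.

Definition collision (m k : nat) (v1 v2 : 'M[int]_(m, k)) : Prop :=
  v1 = v2 \/ v1 = - v2.

Definition no_collisions (n p : nat) (X : 'M[int]_(n, p)) : Prop :=
  (forall i1 i2 : 'I_n, i1 <> i2 -> ~ collision (row i1 X) (row i2 X)) /\
  (forall j1 j2 : 'I_p, j1 <> j2 -> ~ collision (col j1 X) (col j2 X)).

Definition balanced (n p : nat) (X : 'M[int]_(n, p)) : Prop :=
  (forall i : 'I_n, \sum_(j < p) X i j = 0) /\
  (forall j : 'I_p, \sum_(i < n) X i j = 0).

(* Main.v *)
Require Import Defs.
From mathcomp Require Import all_boot all_order all_algebra zify.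
Set Implicit Arguments. Unset Strict Implicit. Unset Printing Implicit Defensive.
Import Order.TTheory GRing.Theory Num.Theory.
Local Open Scope ring_scope.

Lemma trN m n (A : 'M[int]_(m, n)) : (- A)^T = - A^T.
Proof. by apply/matrixP => i j; rewrite !mxE. Qed.

Lemma pm1_tr n p (X : 'M[int]_(n, p)) : pm1_matrix X -> pm1_matrix X^T.
Proof. by move=> H i j; rewrite mxE. Qed.

Lemma bal_tr n p (X : 'M[int]_(n, p)) : balanced X -> balanced X^T.
Proof.
case=> H1 H2; split=> i; [apply: eq_trans (H2 i)|apply: eq_trans (H1 i)]; apply: eq_bigr => k _; by rewrite mxE.
Qed.

Lemma nc_tr n p (X : 'M[int]_(n, p)) : no_collisions X -> no_collisions X^T.
Proof.
case=> H1 H2; split=> i1 i2 Hne Hc.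
- apply: (H2 _ _ Hne); move: Hc; rewrite -!tr_col.
  by case=> E; [left|right]; apply: trmx_inj; rewrite ?trN.
- apply: (H1 _ _ Hne); move: Hc; rewrite -!tr_row.
  by case=> E; [left|right]; apply: trmx_inj; rewrite ?trN.
Qed.

Definition o20 : 'I_2 := @Ordinal 2 0 isT.
Definition o21 : 'I_2 := @Ordinal 2 1 isT.
Lemma I2 (b : 'I_2) : b = o20 \/ b = o21.
Proof. case: b => [[|[|m]]] H //; [left|right]; exact/eqP. Qed.
Lemma sum2 (F : 'I_2 -> int) : \sum_(j < 2) F j = F o20 + F o21.
Proof. rewrite !big_ord_recl big_ord0 addr0; by congr (F _ + F _); apply/eqP. Qed.

Definition o40 : 'I_4 := @Ordinal 4 0 isT.
Definition o41 : 'I_4 := @Ordinal 4 1 isT.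
Definition o42 : 'I_4 := @Ordinal 4 2 isT.
Definition o43 : 'I_4 := @Ordinal 4 3 isT.
Lemma I4 (b : 'I_4) : [\/ b = o40, b = o41, b = o42 | b = o43].
Proof.
case: b => [[|[|[|[|m]]]]] H //; [apply: Or41|apply: Or42|apply: Or43|apply: Or44];
 exact/eqP.
Qed.
Lemma sum4 (F : 'I_4 -> int) : \sum_(j < 4) F j = F o40 + F o41 + F o42 + F o43.
Proof.
rewrite !big_ord_recl big_ord0 addr0 !addrA.
by congr (F _ + F _ + F _ + F _); apply/eqP.
Qed.

Lemma L2 G (X : 'M[int]_(G, 2)) : (2 <= G)%N -> pm1_matrix X ->
  (forall i, \sum_(j < 2) X i j = 0) ->
  exists i1 i2 : 'I_G, i1 <> i2 /\ collision (row i1 X) (row i2 X).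
Proof.
move=> HG pm S.
have h0 : (0 < G)%N by lia.
have h1 : (1 < G)%N by lia.
exists (Ordinal h0), (Ordinal h1); split; first by move=> /(congr1 val).
have := S (Ordinal h0); have := S (Ordinal h1); rewrite !sum2 => s1 s0.
have p0 := pm (Ordinal h0) o20; have p1 := pm (Ordinal h1) o20.
case: (eqVneq (X (Ordinal h0) o20) (X (Ordinal h1) o20)) => [E|/eqP E]; [left|right];
  apply/matrixP => r c; rewrite !mxE; case: (I2 c) => ->; lia.
Qed.

Definition keyn (a b c : int) : nat := if b == a then 0%N else if c == a then 1%N else 2%N.

Lemma pure4 (a b c d a' b' c' d' : int) : (a = 1 \/ a = -1) -> (b = 1 \/ b = -1) ->
  (c = 1 \/ c = -1) -> (d = 1 \/ d = -1) -> (a' = 1 \/ a' = -1) -> (b' = 1 \/ b' = -1) ->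
  (c' = 1 \/ c' = -1) -> (d' = 1 \/ d' = -1) ->
  a + b + c + d = 0 -> a' + b' + c' + d' = 0 -> keyn a b c = keyn a' b' c' ->
  (a = a' /\ b = b' /\ c = c' /\ d = d') \/ (a = - a' /\ b = - b' /\ c = - c' /\ d = - d').
Proof. by do 8 case=> ->; rewrite /keyn /=; lia. Qed.

Lemma L4 G (X : 'M[int]_(G, 4)) : (4 <= G)%N -> pm1_matrix X ->
  (forall i, \sum_(j < 4) X i j = 0) ->
  exists i1 i2 : 'I_G, i1 <> i2 /\ collision (row i1 X) (row i2 X).
Proof.
move=> HG pm S.
pose w (k : 'I_4) : 'I_G := widen_ord HG k.
pose f (k : 'I_4) : 'I_3 := inord (keyn (X (w k) o40) (X (w k) o41) (X (w k) o42)).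
have: ~~ injectiveb f.
  by apply/negP => /injectiveP inj; have := leq_card f inj; rewrite !card_ord.
case/injectivePn => x [y Hxy Hf].
exists (w x), (w y); split.
  move=> E; move/eqP: Hxy; apply; apply: val_inj; exact: (congr1 val E).
have Hk : forall a b c, (keyn a b c < 3)%N by move=> a b c; rewrite /keyn; case: (b == a); case: (c == a).
move/(congr1 val): Hf; rewrite /f /= !inordK ?Hk // => Hk'.
have S1 := S (w x); have S2 := S (w y); rewrite sum4 in S1; rewrite sum4 in S2.
have := pure4 (pm (w x) o40) (pm (w x) o41) (pm (w x) o42) (pm (w x) o43)
  (pm (w y) o40) (pm (w y) o41) (pm (w y) o42) (pm (w y) o43) S1 S2 Hk'.
case=> [[e0 [e1 [e2 e3]]]|[e0 [e1 [e2 e3]]]]; [left|right]; apply/matrixP => r c; rewrite !mxE;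
  by case: (I4 c) => ->.
Qed.

Lemma main B G (X : 'M[int]_(G, B)) : (2 <= B)%N -> (B <= 4)%N -> ~~ odd B ->
  (2 <= G)%N -> ~~ odd G -> pm1_matrix X -> balanced X -> no_collisions X -> False.
Proof.
case: B X => [|[|[|[|[|B]]]]] //= X _ _ _ HG HoG pm [S1 S2] [N1 N2].
- have [i1 [i2 [Hne Hc]]] := L2 HG pm S1.
  exact: (N1 _ _ Hne Hc).
- case: (leqP 4 G) => HG4.
  + have [i1 [i2 [Hne Hc]]] := L4 HG4 pm S1.
    exact: (N1 _ _ Hne Hc).
  + have HG2 : G = 2%N.
      by move: HG HoG HG4; case: G X S1 S2 N1 N2 pm => [|[|[|[|G]]]].
    subst G.
    have [S2' _] := bal_tr (conj S1 S2).
    have [N1' _] := nc_tr (conj N1 N2).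
    have [i1 [i2 [Hne Hc]]] := L2 (isT : (2 <= 4)%N) (pm1_tr pm) S2'.
    exact: (N1' _ _ Hne Hc).
Qed.
Definition tbl (L : seq (seq int)) (i j : nat) : int := nth 0 (nth [::] L i) j.

Definition goodb (L : seq (seq int)) n p : bool :=
  let t := tbl L in
  [&& all (fun i => all (fun j => (t i j == 1) || (t i j == -1)) (iota 0 p)) (iota 0 n),
      all (fun i => foldr (fun j s => t i j + s) 0 (iota 0 p) == 0) (iota 0 n),
      all (fun j => foldr (fun i s => t i j + s) 0 (iota 0 n) == 0) (iota 0 p),
      all (fun i1 => all (fun i2 => (i1 != i2) ==>
          has (fun j => t i1 j != t i2 j) (iota 0 p) && has (fun j => t i1 j != - t i2 j) (iota 0 p))
          (iota 0 n)) (iota 0 n) &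
      all (fun j1 => all (fun j2 => (j1 != j2) ==>
          has (fun i => t i j1 != t i j2) (iota 0 n) && has (fun i => t i j1 != - t i j2) (iota 0 n))
          (iota 0 p)) (iota 0 p)].

Lemma sum_foldr (F : nat -> int) (s : seq nat) :
  \sum_(j <- s) F j = foldr (fun j s => F j + s) 0 s.
Proof. by elim: s => [|a s IH]; rewrite ?big_nil ?big_cons ?IH. Qed.

Lemma sum_ord_foldr (F : nat -> int) p :
  \sum_(j < p) F j = foldr (fun j s => F j + s) 0 (iota 0 p).
Proof. rewrite -(big_mkord (fun _ => true) F) /index_iota subn0 -sum_foldr //. Qed.

Lemma memI (k : nat) m (x : 'I_m) : (x : nat) \in iota 0 m.
Proof. by rewrite mem_iota /=. Qed.

Lemma goodbP L n p : goodb L n p ->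
  exists X : 'M[int]_(n, p), pm1_matrix X /\ balanced X /\ no_collisions X.
Proof.
case/and5P=> /allP H1 /allP H2 /allP H3 /allP H4 /allP H5.
exists (\matrix_(i, j) tbl L i j).
split; [|split; [split|split]].
- move=> i j; rewrite mxE.
  by case/orP: (allP (H1 _ (memI 0 i)) _ (memI 0 j)) => /eqP ->; [left|right].
- move=> i; apply: (eq_trans _ (eqP (H2 _ (memI 0 i)))).
  rewrite -sum_ord_foldr; apply: eq_bigr => j _; by rewrite mxE.
- move=> j; apply: (eq_trans _ (eqP (H3 _ (memI 0 j)))).
  rewrite -sum_ord_foldr; apply: eq_bigr => i _; by rewrite mxE.
- move=> i1 i2 Hne.
  have Hne' : (i1 : nat) != i2 by apply/eqP => E; apply: Hne; apply: val_inj.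
  have /implyP/(_ Hne')/andP[/hasP[j Hj1 Hj] /hasP[k Hk1 Hk]] := allP (H4 _ (memI 0 i1)) _ (memI 0 i2).
  move: Hj1 Hk1; rewrite !mem_iota !add0n /= => Hj1 Hk1.
  case=> /matrixP E.
  + by move: (E 0 (Ordinal Hj1)); rewrite !mxE /= => /eqP; rewrite (negbTE Hj).
  + by move: (E 0 (Ordinal Hk1)); rewrite !mxE /= => /eqP; rewrite (negbTE Hk).
- move=> i1 i2 Hne.
  have Hne' : (i1 : nat) != i2 by apply/eqP => E; apply: Hne; apply: val_inj.
  have /implyP/(_ Hne')/andP[/hasP[j Hj1 Hj] /hasP[k Hk1 Hk]] := allP (H5 _ (memI 0 i1)) _ (memI 0 i2).
  move: Hj1 Hk1; rewrite !mem_iota !add0n /= => Hj1 Hk1.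
  case=> /matrixP E.
  + by move: (E (Ordinal Hj1) 0); rewrite !mxE /= => /eqP; rewrite (negbTE Hj).
  + by move: (E (Ordinal Hk1) 0); rewrite !mxE /= => /eqP; rewrite (negbTE Hk).
Qed.

Definition M6 : seq (seq int) := [:: [:: -1; 1; 1; -1; 1; -1]; [:: 1; -1; 1; 1; -1; -1]; [:: 1; -1; 1; -1; -1; 1]; [:: 1; 1; -1; -1; 1; -1]; [:: -1; -1; -1; 1; 1; 1]; [:: -1; 1; -1; 1; -1; 1]].
Definition M8 : seq (seq int) := [:: [:: -1; 1; 1; -1; -1; -1; 1; 1]; [:: -1; 1; -1; 1; 1; -1; 1; -1]; [:: -1; -1; 1; -1; 1; 1; 1; -1]; [:: 1; 1; -1; -1; -1; -1; 1; 1]; [:: -1; -1; 1; 1; 1; -1; -1; 1]; [:: 1; 1; -1; -1; 1; 1; -1; -1]; [:: 1; -1; 1; 1; -1; 1; -1; -1]; [:: 1; -1; -1; 1; -1; 1; -1; 1]].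
Lemma g6 : goodb M6 6 6. Proof. by vm_compute. Qed.
Lemma g8 : goodb M8 8 8. Proof. by vm_compute. Qed.

Theorem theorem2 :
  (forall B G : nat, (2 <= B)%N -> (2 <= G)%N -> ~~ odd B -> ~~ odd G ->
     (minn B G <= 4)%N ->
     ~ (exists X : 'M[int]_(G, B), pm1_matrix X /\ balanced X /\ no_collisions X)) /\
  (forall B G : nat, ((B == 6) && (G == 6) \/ (B == 8) && (G == 8))%N ->
     exists X : 'M[int]_(G, B), pm1_matrix X /\ balanced X /\ no_collisions X).
Proof.
split.
- move=> B G HB HG HoB HoG Hmin [X [pm [bal nc]]].
  have: (B <= 4)%N \/ (G <= 4)%N by lia.
  case=> H.
  + exact: (main HB H HoB HG HoG pm bal nc).
  + exact: (main HG H HoG HB HoB (pm1_tr pm) (bal_tr bal) (nc_tr nc)).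
- move=> B G [/andP[/eqP-> /eqP->] | /andP[/eqP-> /eqP->]]; [exact: goodbP g6 | exact: goodbP g8].
Qed.
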